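(* Let $1\to K\to G\xrightarrow{p} Q\to 1$ be an exact sequence of groups, where $K$ is a torsion group (so $p:G\to Q$ is a surjection with kernel $K$). Then an element $g\in G$ is a genuine generalized torsion element of $G$ if and only if $p(g)$ is a genuine generalized torsion element of $Q$.
   Context: For $g,x$ in a group, $g^{x}:=xgx^{-1}$. A non-trivial element $g$ of a group $G$ is a generalized torsion element if there exist a positive integer $n$ and $x_1,\ldots,x_n\in G$ with $g^{x_1}g^{x_2}\cdots g^{x_n}=1$. A generalized torsion element is genuine if it is not a torsion element. A torsion group is a group all of whose elements have finite order. *)

(* Defs.v *)
From Stdlib Require Import List Arith.
Import ListNotations.

Record Group := {
  carrier :> Type;
  gmul : carrier -> carrier -> carrier;
  gone : carrier;
  ginv : carrier -> carrier;
  gmulA : forall x y z, gmul x (gmul y z) = gmul (gmul x y) z;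
  gmul1g : forall x, gmul gone x = x;
  gmulg1 : forall x, gmul x gone = x;
  gmulVg : forall x, gmul (ginv x) x = gone;
  gmulgV : forall x, gmul x (ginv x) = gone
}.

Arguments gmul {G} : rename.
Arguments gone {G} : rename.
Arguments ginv {G} : rename.

Definition gconj {G : Group} (g x : G) : G := gmul x (gmul g (ginv x)).

Fixpoint gpow {G : Group} (g : G) (n : nat) : G :=
  match n with O => gone | S m => gmul g (gpow g m) end.

Definition torsion_elt {G : Group} (g : G) : Prop :=
  exists n : nat, 0 < n /\ gpow g n = gone.

Definition torsion_group (G : Group) : Prop := forall g : G, torsion_elt g.

Definition conj_prod {G : Group} (g : G) (xs : list G) : G :=
  fold_right (fun x acc => gmul (gconj g x) acc) gone xs.

Definition gen_torsion {G : Group} (g : G) : Prop :=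
  g <> gone /\ exists xs : list G, xs <> [] /\ conj_prod g xs = gone.

Definition genuine_gen_torsion {G : Group} (g : G) : Prop :=
  gen_torsion g /\ ~ torsion_elt g.

Definition is_hom {G H : Group} (f : G -> H) : Prop :=
  forall x y, f (gmul x y) = gmul (f x) (f y).

(* The kernel of p, viewed as a group: every element of the kernel has
   finite order in G (equivalently in the subgroup K = ker p). *)
Definition torsion_kernel {G Q : Group} (p : G -> Q) : Prop :=
  forall k : G, p k = gone -> torsion_elt k.

(* Main.v *)
Require Import Defs.
From Stdlib Require Import List Arith Lia.
Import ListNotations.

Section Aux.
Variable G : Group.

Lemma idem_one (a : G) : gmul a a = a -> a = gone.
Proof.
  intro H. rewrite <- (gmul1g G a). rewrite <- (gmulVg G a) at 1.
  rewrite <- gmulA, H. apply gmulVg.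
Qed.

Lemma inv_uniq (a b : G) : gmul a b = gone -> b = ginv a.
Proof.
  intro H. rewrite <- (gmul1g G b). rewrite <- (gmulVg G a).
  rewrite <- gmulA, H. apply gmulg1.
Qed.

Lemma gpow_add (g : G) a b : gpow g (a + b) = gmul (gpow g a) (gpow g b).
Proof.
  induction a; simpl. now rewrite gmul1g. rewrite IHa. apply gmulA.
Qed.

Lemma gpow_one n : gpow (@gone G) n = gone.
Proof. induction n; simpl; auto. rewrite IHn. apply gmul1g. Qed.

Lemma gpow_mul (g : G) n m : gpow g (n * m) = gpow (gpow g n) m.
Proof.
  revert n; induction m; intro n.
  - now rewrite Nat.mul_0_r.
  - replace (n * S m) with (n + n * m) by lia. rewrite gpow_add, IHm. reflexivity.
Qed.

Lemma conj_prod_app (g : G) xs ys :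
  conj_prod g (xs ++ ys) = gmul (conj_prod g xs) (conj_prod g ys).
Proof.
  induction xs; simpl. now rewrite gmul1g.
  unfold conj_prod in *. simpl. rewrite IHxs. apply gmulA.
Qed.

Fixpoint rep (xs : list G) (m : nat) : list G :=
  match m with O => [] | S k => xs ++ rep xs k end.

Lemma conj_prod_rep (g : G) xs m : conj_prod g (rep xs m) = gpow (conj_prod g xs) m.
Proof.
  induction m; simpl. reflexivity. rewrite conj_prod_app, IHm. reflexivity.
Qed.

End Aux.

Section Hom.
Variables G Q : Group.
Variable p : G -> Q.
Hypothesis p_hom : is_hom p.

Lemma hom_one : p gone = gone.
Proof. apply idem_one. rewrite <- p_hom, gmul1g. reflexivity. Qed.

Lemma hom_inv x : p (ginv x) = ginv (p x).
Proof. apply inv_uniq. rewrite <- p_hom, gmulgV. apply hom_one. Qed.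

Lemma hom_pow g n : p (gpow g n) = gpow (p g) n.
Proof. induction n; simpl. apply hom_one. rewrite p_hom, IHn. reflexivity. Qed.

Lemma hom_conj_prod g xs : p (conj_prod g xs) = conj_prod (p g) (map p xs).
Proof.
  induction xs; simpl. apply hom_one.
  unfold conj_prod in *; simpl. rewrite p_hom, IHxs. unfold gconj.
  rewrite !p_hom, hom_inv. reflexivity.
Qed.
End Hom.

Theorem theorem1p3 (G Q : Group) (p : G -> Q)
  (p_hom : is_hom p)
  (p_surj : forall q : Q, exists g : G, p g = q)
  (K_torsion : torsion_kernel p) :
  forall g : G, genuine_gen_torsion g <-> genuine_gen_torsion (p g).
Proof.
  intro g. split.
  - intros [[gne [xs [xsne Hxs]]] nt]. split; [split|].
    + intro E. apply nt. now apply K_torsion.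
    + exists (map p xs). split.
      * destruct xs; simpl; congruence.
      * rewrite <- hom_conj_prod by assumption. rewrite Hxs. now apply hom_one.
    + intros [n [Hn Hpow]]. apply nt.
      rewrite <- hom_pow in Hpow by assumption.
      destruct (K_torsion _ Hpow) as [m [Hm Hm']].
      exists (n * m). split. lia. now rewrite gpow_mul.
  - intros [[gne [ys [ysne Hys]]] nt]. split; [split|].
    + intro E. apply gne. rewrite E. now apply hom_one.
    + assert (L : forall ys : list Q, exists xs, map p xs = ys).
      { induction ys0 as [|y ys0 IH]. exists []; reflexivity.
        destruct IH as [xs Hx]. destruct (p_surj y) as [x Hx'].
        exists (x :: xs). simpl. congruence. }
      destruct (L ys) as [xs Hxs]. subst ys.
      assert (Hk : p (conj_prod g xs) = gone).
      { rewrite hom_conj_prod by assumption. exact Hys. }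
      destruct (K_torsion _ Hk) as [m [Hm Hm']].
      exists (rep G xs m). split.
      * destruct m. lia. destruct xs. simpl in ysne; congruence. simpl. congruence.
      * rewrite conj_prod_rep. exact Hm'.
    + intros [n [Hn Hpow]]. apply nt. exists n. split. exact Hn.
      rewrite <- hom_pow by assumption. rewrite Hpow. now apply hom_one.
Qed.
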